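(* Let $(L,\vee,\wedge,0,1)$ be a complemented modular lattice with $0\ne1$ and $a,b,c\in L$. Then $a\odot b\le\{c\}$ if and only if $\{a\}\le b\to c$.
   Context: For $a\in L$, $a^+:=\{x\in L\mid a\vee x=1,\ a\wedge x=0\}$ (the set of all complements of $a$). Define $a\odot b:=\{b\wedge(a\vee x)\mid x\in b^+\}$ and $a\to b:=\{x\vee(a\wedge b)\mid x\in a^+\}$. For $A,B\subseteq L$, $A\le B$ means $x\le y$ for all $x\in A$ and all $y\in B$. *)

(* Defs.v *)
From HB Require Import structures.
From mathcomp Require Import all_boot all_order.
Set Implicit Arguments. Unset Strict Implicit. Unset Printing Implicit Defensive.
Import Order.TTheory.
Local Open Scope order_scope.

Definition modular_lattice {d} (L : tbLatticeType d) : Prop :=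
  forall x y z : L, x <= z -> x `|` (y `&` z) = (x `|` y) `&` z.

Definition compls {d} {L : tbLatticeType d} (a : L) : L -> Prop :=
  fun x => a `|` x = \top /\ a `&` x = \bot.

Definition complemented_lattice {d} (L : tbLatticeType d) : Prop :=
  forall a : L, exists x, compls a x.

Definition odot {d} {L : tbLatticeType d} (a b : L) : L -> Prop :=
  fun y => exists x, compls b x /\ y = b `&` (a `|` x).

Definition arrow {d} {L : tbLatticeType d} (a b : L) : L -> Prop :=
  fun y => exists x, compls a x /\ y = x `|` (a `&` b).

Definition set_le {d} {L : tbLatticeType d} (A B : L -> Prop) : Prop :=
  forall x y, A x -> B y -> x <= y.

Definition sing {d} {L : tbLatticeType d} (c : L) : L -> Prop := fun y => y = c.

(* Main.v *)
Require Import Defs.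
From HB Require Import structures.
From mathcomp Require Import all_boot all_order.
Import Order.TTheory.
Local Open Scope order_scope.

Theorem theorem5 (d : Order.disp_t) (L : tbLatticeType d)
  (Hmod : modular_lattice L) (Hcompl : complemented_lattice L)
  (H01 : (\bot : L) <> \top) (a b c : L) :
  set_le (odot a b) (sing c) <-> set_le (sing a) (arrow b c).
Proof.
split.
- move=> H x y -> [z [[Hj Hm] ->]].
  have Hb : b `&` (a `|` z) <= c by apply: (H _ c) => //; exists z.
  have Hbc : b `&` (a `|` z) <= b `&` c by rewrite lexI Hb leIl.
  have E : z `|` (b `&` (a `|` z)) = a `|` z.
    by rewrite Hmod ?leUr // [z `|` b]joinC Hj meetC meetx1.
  apply: le_trans (leUl a z) _.
  rewrite -E; exact: leU2 (lexx z) Hbc.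
- move=> H x y [z [[Hj Hm] ->]] ->.
  have Ha : a <= z `|` (b `&` c) by apply: (H a) => //; exists z.
  have E : b `&` (z `|` (b `&` c)) = b `&` c.
    rewrite joinC meetC -Hmod ?leIl // [z `&` b]meetC Hm.
    by rewrite joinx0.
  apply: (le_trans _ (leIr c b)).
  rewrite -E; apply: leI2 (lexx b) _.
  by rewrite leUx Ha leUl.
Qed.
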